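(* A differentiated history $h$ has a projection $h'=h|_D$ (for some set $D$ of data values) such that $h'$ contains a $DeqEmpty$ operation and $h'\not\sqsubseteq M(R_{DeqEmpty})$ if and only if $h$ has a $DeqEmpty$ operation $o$ and data values $d_1,\dots,d_m\in\mathrm{dom}(h)$ such that: $Enq(d_1)<_{hb} o$; $Enq(d_i)<_{hb}Deq(d_{i-1})$ for every $1<i\le m$; and either $o<_{hb}Deq(d_m)$ or $h$ contains no operation $Deq(d_m)$.
   Context: Data values are natural numbers. Operations are pairs of a method in $\{Enq, Deq, DeqEmpty\}$ and a data value (for $DeqEmpty$ a ghost identifier). A history $h$ is a finite set of operations with a strict partial order $<_{hb}$ (happens-before) that is an interval order. $\mathrm{dom}(h)$ is the set of data values of $h$. $h$ is differentiated if each data value is carried by at most one $Enq$ or $DeqEmpty$ operation and the value of a $DeqEmpty$ operation is carried by no other operation. For a set $D$ of data values, $h|_D$ is the restriction of $h$ to operations with value in $D$. A sequential execution is a finite sequence of method events; $h\sqsubseteq u$ means there is a bijection between operations of $h$ and positions of $u$ preserving method and value with $o_1<_{hb}o_2$ implying the image of $o_1$ precedes that of $o_2$; $h\sqsubseteq S$ means $h\sqsubseteq u$ for some $u\in S$. $M(R_{DeqEmpty})$ is the set of sequential executions $u\cdot DeqEmpty(x)\cdot v$ where every $Enq(d)$ in $u$ has a $Deq(d)$ in $u$, and $x$ does not occur in $u,v$. *)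

(* Defs.v *)
From Stdlib Require List.
From mathcomp Require Import all_boot.
Set Implicit Arguments. Unset Strict Implicit. Unset Printing Implicit Defensive.

Inductive method := Enq | Deq | DeqEmpty.

Definition event := (method * nat)%type.

(* A history: a finite set of operations (identified by the elements of a
   finite type, so several operations may carry the same method/value, e.g.
   several Deq(d)), labelled with a method and a data value (for DeqEmpty the
   value is its ghost identifier), together with the happens-before relation. *)
Record history := History {
  hop : finType;
  hmeth : hop -> method;
  hval : hop -> nat;
  hb : hop -> hop -> Prop
}.

Definition is_history (h : history) : Prop :=
  (forall o : hop h, ~ hb o o) /\
  (forall o1 o2 o3 : hop h, hb o1 o2 -> hb o2 o3 -> hb o1 o3) /\
  (forall a b c d : hop h, hb a b -> hb c d -> hb a d \/ hb c b).

Definition in_dom (h : history) (d : nat) : Prop := exists o : hop h, hval o = d.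

Definition differentiated (h : history) : Prop :=
  (forall o1 o2 : hop h,
      (hmeth o1 = Enq \/ hmeth o1 = DeqEmpty) ->
      (hmeth o2 = Enq \/ hmeth o2 = DeqEmpty) ->
      hval o1 = hval o2 -> o1 = o2) /\
  (forall o1 o2 : hop h, hmeth o1 = DeqEmpty -> hval o2 = hval o1 -> o2 = o1).

(* h|_D : restriction to the operations whose value is in D.  (Only D ∩ dom(h)
   matters, which is finite, so a boolean predicate D loses no generality.) *)
Definition restrict (h : history) (D : pred nat) : history :=
  @History {o : hop h | D (hval o)}
    (fun o => hmeth (sval o)) (fun o => hval (sval o))
    (fun o1 o2 => hb (sval o1) (sval o2)).

Definition ev0 : event := (Enq, 0).

Definition lin (h : history) (u : seq event) : Prop :=
  exists f : hop h -> 'I_(size u),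
    bijective f /\
    (forall o : hop h, nth ev0 u (f o) = (hmeth o, hval o)) /\
    (forall o1 o2 : hop h, hb o1 o2 -> (f o1 < f o2)%N).

Definition in_M_DeqEmpty (w : seq event) : Prop :=
  exists (u v : seq event) (x : nat),
    w = u ++ (DeqEmpty, x) :: v /\
    (forall d, List.In (Enq, d) u -> List.In (Deq, d) u) /\
    (forall m, ~ List.In (m, x) u /\ ~ List.In (m, x) v).

Definition lin_M_DeqEmpty (h : history) : Prop :=
  exists w, in_M_DeqEmpty w /\ lin h w.

Definition has_DeqEmpty (h : history) : Prop :=
  exists o : hop h, hmeth o = DeqEmpty.

(* Main.v *)
Require Import Defs.
From mathcomp Require Import all_boot.
From mathcomp Require Import zify.
From Stdlib Require Import Classical ClassicalEpsilon.
Set Implicit Arguments. Unset Strict Implicit. Unset Printing Implicit Defensive.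

Definition pb (P : Prop) : bool := if excluded_middle_informative P then true else false.
Lemma pbP P : reflect P (pb P).
Proof. rewrite /pb; case: excluded_middle_informative => H; constructor; done. Qed.

Lemma In_map_mem (T : eqType) A (f : T -> A) (t : seq T) y :
  List.In y (map f t) <-> exists x, x \in t /\ f x = y.
Proof.
elim: t => [|a t IH] /=; split; first done.
- by case=> x [].
- case=> [<-|/IH [x [Hx E]]]; first by exists a; rewrite inE eqxx.
  by exists x; rewrite inE Hx orbT.
- case=> x []; rewrite inE => /orP[/eqP->|Hx] E; first by left.
  by right; apply/IH; exists x.
Qed.

Lemma In_nth A (x0 : A) (s : seq A) x : List.In x s -> exists i, i < size s /\ nth x0 s i = x.
Proof.
elim: s => [|a s IH] //= [<-|/IH [i [Hi E]]]; first by exists 0.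
by exists i.+1.
Qed.

Lemma nth_In A (x0 : A) (s : seq A) i : i < size s -> List.In (nth x0 s i) s.
Proof.
elim: s i => [|a s IH] [|i] //= Hi; first by left.
by right; apply: IH.
Qed.

Lemma split_at (T : eqType) (s : seq T) x : x \in s ->
  s = take (index x s) s ++ x :: drop (index x s).+1 s.
Proof.
move=> Hx; rewrite -[X in X = _](cat_take_drop (index x s) s).
by rewrite (drop_nth x) ?index_mem // nth_index.
Qed.

Lemma list_min (T : eqType) (le : T -> T -> Prop) :
  (forall a b, le a b \/ le b a) -> (forall a b c, le a b -> le b c -> le a c) ->
  (forall a, le a a) ->
  forall l : seq T, l <> [::] -> exists2 p0, p0 \in l & forall p, p \in l -> le p0 p.
Proof.
move=> tot tr rf; elim=> [//|a l IH] _.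
case: l IH => [|b l] IH.
  exists a; first by rewrite mem_seq1.
  by move=> p; rewrite mem_seq1 => /eqP->.
have: b :: l <> [::] by [].
move/IH => [p1 Hp1 Hm].
case: (tot a p1) => H.
  exists a; first by rewrite inE eqxx.
  move=> p; rewrite inE => /orP[/eqP->//|Hp]. exact: tr H (Hm _ Hp).
exists p1; first by rewrite inE Hp1 orbT.
move=> p; rewrite inE => /orP[/eqP->//|Hp]; exact: Hm.
Qed.

Definition minD (g : history) d (p0 : hop g) :=
  hmeth p0 = Deq /\ hval p0 = d /\
  forall x p : hop g, hb x p0 -> hmeth p = Deq -> hval p = d -> hb x p.

Lemma pmin_ex (g : history) d : is_history g ->
  (exists p : hop g, hmeth p = Deq /\ hval p = d) -> exists p0 : hop g, minD d p0.
Proof.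
move=> [irr [tr iv]] [p [Hm Hv]].
pose le := fun p q : hop g => forall x, hb x p -> hb x q.
have tot : forall a b, le a b \/ le b a.
  move=> a b; case: (classic (le a b)) => H; [by left|right].
  have [x Hx] := not_all_ex_not _ _ H.
  have [Hxa Hxb] := imply_to_and _ _ Hx.
  move=> y Hyb.
  by case: (iv _ _ _ _ Hxa Hyb) => // /Hxb.
pose l := [seq q <- enum (hop g) | pb (hmeth q = Deq /\ hval q = d)].
have lnn : l <> [::].
  move=> E. have : p \in l by rewrite mem_filter mem_enum andbT; apply/pbP.
  by rewrite E.
have [p0 Hp0 Hmin] := list_min tot (fun a b c H1 H2 x Hx => H2 x (H1 x Hx)) (fun a x Hx => Hx) lnn.
move: Hp0; rewrite mem_filter => /andP[/pbP[H1 H2] _].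
exists p0; split=> //; split=> // x q Hx Hq1 Hq2.
apply: (Hmin q) => //. rewrite mem_filter mem_enum andbT; exact/pbP.
Qed.

Inductive reach (g : history) (o : hop g) : nat -> Prop :=
| reach1 (e : hop g) : hmeth e = Enq -> hb e o -> reach o (hval e)
| reachS (d : nat) (e : hop g) : reach o d -> hmeth e = Enq ->
    (forall p : hop g, hmeth p = Deq -> hval p = d -> hb e p) -> reach o (hval e).

Definition chainTo (g : history) (o : hop g) (m : nat) (dd : nat -> nat) :=
  (1 <= m)%N /\
  (forall i, (1 <= i <= m)%N -> in_dom g (dd i)) /\
  (exists e : hop g, hmeth e = Enq /\ hval e = dd 1 /\ hb e o) /\
  (forall i, (1 < i <= m)%N ->
     exists e : hop g, hmeth e = Enq /\ hval e = dd i /\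
       forall p : hop g, hmeth p = Deq -> hval p = dd i.-1 -> hb e p).

Lemma reach_chain g (o : hop g) d : reach o d -> exists m dd, chainTo o m dd /\ dd m = d.
Proof.
elim=> [e He Heo | d' e _ [m [dd [[Hm [Hdom [H1 Hi]]] Hd]]] He Hep].
  exists 1, (fun _ => hval e); split=> //; split=> //; split.
    by move=> i _; exists e.
  split; first by exists e.
  move=> i; lia.
exists m.+1, (fun i => if i == m.+1 then hval e else dd i).
split; last by rewrite eqxx.
split=> //; split.
  move=> i Hi'; case: (@eqP _ i m.+1) => [_|Hne]; first by exists e.
  apply: Hdom; lia.
split.
  have -> : (1 == m.+1) = false by apply/eqP; lia.
  exact: H1.
move=> i Hi'; case: (@eqP _ i m.+1) => [Ei|Hne].
  exists e; split=> //; split=> //.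
  move=> p Hp; rewrite Ei /=; have -> : (m == m.+1) = false by apply/eqP; lia.
  rewrite Hd; exact: Hep p Hp.
have -> : (i.-1 == m.+1) = false by apply/eqP; lia.
apply: Hi; lia.
Qed.
Lemma index_take (T : eqType) (s : seq T) n y : y \in take n s -> index y s < n.
Proof.
move=> Hy; rewrite -[s in index y s](cat_take_drop n s) index_cat Hy.
apply: (@leq_trans (size (take n s))); first by rewrite index_mem.
by rewrite size_take_min geq_minl.
Qed.

Lemma mem_take_index (T : eqType) (s : seq T) n x : index x s < n -> x \in s -> x \in take n s.
Proof.
move=> Hn Hx; rewrite -(nth_index x Hx) -(nth_take x Hn); apply: mem_nth.
by rewrite size_take_min leq_min Hn index_mem Hx.
Qed.

Definition RHS (h : history) : Prop :=
   (exists (o : hop h) (m : nat) (d : nat -> nat),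
       hmeth o = DeqEmpty /\ (1 <= m)%N /\
       (forall i, (1 <= i <= m)%N -> in_dom h (d i)) /\
       (exists e : hop h, hmeth e = Enq /\ hval e = d 1 /\ hb e o) /\
       (forall i, (1 < i <= m)%N ->
          exists e : hop h, hmeth e = Enq /\ hval e = d i /\
            forall p : hop h, hmeth p = Deq -> hval p = d i.-1 -> hb e p) /\
       ((forall p : hop h, hmeth p = Deq -> hval p = d m -> hb o p) \/
        ~ (exists p : hop h, hmeth p = Deq /\ hval p = d m))).

Lemma chain_RHS g (o : hop g) m dd : hmeth o = DeqEmpty -> chainTo o m dd ->
  ((forall p : hop g, hmeth p = Deq -> hval p = dd m -> hb o p) \/
   ~ (exists p : hop g, hmeth p = Deq /\ hval p = dd m)) -> RHS g.
Proof. move=> Ho [H1 [H2 [H3 H4]]] H5; exists o, m, dd; tauto. Qed.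

Lemma lemA (g : history) (o : hop g) : is_history g -> differentiated g ->
  hmeth o = DeqEmpty -> ~ RHS g -> lin_M_DeqEmpty g.
Proof.
move=> Hh [Hd1 Hd2] Ho nR.
have [irr [tr iv]] := Hh.
have noDeq : forall d, reach o d -> exists p : hop g, hmeth p = Deq /\ hval p = d.
  move=> d /reach_chain [m [dd [Hc Hm]]].
  apply: NNPP => H; apply: nR; apply: (chain_RHS Ho Hc); right; by rewrite Hm.
have noAfter : forall d (p0 : hop g), reach o d -> minD d p0 -> ~ hb o p0.
  move=> d p0 /reach_chain [m [dd [Hc Hm]]] [_ [_ Hmin]] Hop.
  apply: nR; apply: (chain_RHS Ho Hc); left => p Hp1 Hp2.
  apply: (Hmin o p Hop Hp1); by rewrite Hp2 Hm.
pose B (x : hop g) := hb x o \/ exists d (p0 : hop g), reach o d /\ minD d p0 /\ (x = p0 \/ hb x p0).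
have Bdown : forall x y, hb y x -> B x -> B y.
  move=> x y Hyx [Hxo|[d [p0 [Hr [Hm Hx]]]]]; [left; exact: tr Hyx Hxo|].
  right; exists d, p0; split=>//; split=>//; right.
  case: Hx => [<-//|]; exact: tr.
have nBo : ~ B o.
  case=> [/irr//|[d [p0 [Hr [Hm [E|Hx]]]]]].
    by move: Hm => [+ _]; rewrite -E Ho.
  exact: noAfter Hr Hm Hx.
have BEnq : forall x, B x -> hmeth x = Enq -> exists p0, minD (hval x) p0 /\ B p0.
  move=> x Bx Hx.
  have Hr : reach o (hval x).
    case: Bx => [Hxo|[d [p0 [Hr [Hm [E|Hxp]]]]]]; first exact: reach1.
      by move: Hm => [+ _]; rewrite -E Hx.
    apply: (reachS Hr Hx) => p Hp1 Hp2. move: Hm => [_ [_ Hmin]]. exact: Hmin Hxp Hp1 Hp2.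
  have [p0 Hp0] := pmin_ex Hh (noDeq _ Hr).
  exists p0; split=> //; right; exists (hval x), p0; split=> //; split=> //; by left.
pose N := #|hop g|.
pose K (x : hop g) := #|[set y | pb (hb y x)]|.
pose rk (x : hop g) := if pb (B x) then 0 else if x == o then 1 else 2.
pose K' x := rk x * N.+1 + K x.
have KN : forall x, K x <= N by move=> x; apply: max_card.
have Klt : forall x y, hb x y -> K x < K y.
  move=> x y Hxy; apply: proper_card; apply/properP; split.
    apply/subsetP => z; rewrite !inE => /pbP Hz; apply/pbP; exact: tr Hz Hxy.
  exists x; rewrite !inE; [exact/pbP | apply/pbP; exact: irr].
have rk0 : forall x, B x -> rk x = 0.
  by move=> x Bx; rewrite /rk; case: (pbP (B x)).
have rk0' : forall x, rk x = 0 -> B x.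
  by move=> x; rewrite /rk; case: (pbP (B x)) => // _; case: eqP.
have rko : rk o = 1 by rewrite /rk; case: (pbP (B o)) => // _; rewrite eqxx.
have rk1 : forall x, rk x = 1 -> x = o.
  by move=> x; rewrite /rk; case: (pbP (B x)) => // _; case: eqP.
have rk2 : forall x, rk x <= 2.
  by move=> x; rewrite /rk; case: (pbP (B x)) => // _; case: eqP.
have rkle : forall x y, hb x y -> rk x <= rk y.
  move=> x y Hxy.
  case: (pbP (B y)) => By; first by rewrite (rk0 _ (Bdown _ _ Hxy By)).
  have [Ey|Ney] := eqVneq y o.
    by rewrite (rk0 x) //; left; rewrite -Ey.
  have -> : rk y = 2 by rewrite /rk; case: (pbP (B y)) => // _; rewrite (negbTE Ney).
  exact: rk2.
have K'lt : forall x y, hb x y -> K' x < K' y.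
  move=> x y H; have := Klt _ _ H; have := rkle _ _ H; have := KN x; have := KN y.
  rewrite /K'; nia.
pose leK := fun a b : hop g => K' a <= K' b.
pose s := sort leK (enum (hop g)).
have s_uniq : uniq s by rewrite sort_uniq enum_uniq.
have s_mem : forall x, x \in s by move=> x; rewrite mem_sort mem_enum.
have s_sorted : sorted leK s by apply: sort_sorted => a b; rewrite /leK leq_total.
have s_mono : forall i j, i < size s -> j < size s -> i <= j -> K' (nth o s i) <= K' (nth o s j).
  move=> i j Hi Hj Hij; apply: (sorted_leq_nth _ _ _ s_sorted) => //.
  - by move=> a b c; rewrite /leK; apply: leq_trans.
  - by move=> a; rewrite /leK.
have idx_lt : forall x y, K' x < K' y -> index x s < index y s.
  move=> x y H; rewrite ltnNge; apply/negP => Hle.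
  have := s_mono _ _ (etrans (index_mem y s) (s_mem y)) (etrans (index_mem x s) (s_mem x)) Hle.
  rewrite !nth_index ?s_mem // => H'. lia.
have Us : uniq (take (index o s) s ++ o :: drop (index o s).+1 s) by rewrite -split_at ?s_mem.
move: (Us); rewrite cat_uniq => /and3P [_ Hno Hod'].
move: Hno => /= /norP [oT _].
move: Hod' => /= /andP [Hod _].
pose ev (x : hop g) := (hmeth x, hval x).
exists (map ev s); split.
  exists (map ev (take (index o s) s)), (map ev (drop (index o s).+1 s)), (hval o).
  split.
    by rewrite {1}(split_at (s_mem o)) map_cat /= /ev Ho.
  split.
    move=> d /In_map_mem [y [Hy E]].
    move: E; rewrite /ev => -[Hy1 Hy2].
    have iy : index y s < index o s by apply: index_take.
    have Kyo : K' y <= K' o.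
      have := s_mono _ _ (etrans (index_mem y s) (s_mem y)) (etrans (index_mem o s) (s_mem o)) (ltnW iy).
      by rewrite !nth_index ?s_mem.
    have By : B y.
      apply: rk0'. have := rk2 y. have := KN y; have := KN o. move: Kyo; rewrite /K' rko.
      case Ey: (rk y) => [|[|k]] //.
        move: (rk1 _ Ey) => Eyo. by move: Hy; rewrite Eyo (negbTE oT).
      lia.
    have [p0 [[Hp1 [Hp2 _]] Bp0]] := BEnq y By Hy1.
    have ip : index p0 s < index o s.
      apply: idx_lt; rewrite /K' rko (rk0 _ Bp0). have := KN p0. lia.
    apply/In_map_mem; exists p0; split; first by apply: mem_take_index; rewrite ?s_mem.
    by rewrite /ev Hp1 Hp2 Hy2.
  move=> mm; split=> /In_map_mem [y [Hy E]]; move: E; rewrite /ev => -[_ Hy2].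
    have Eyo : y = o by apply: Hd2.
    by move: Hy; rewrite Eyo (negbTE oT).
  have Eyo : y = o by apply: Hd2.
  by move: Hy; rewrite Eyo (negbTE Hod).
have fok : forall x, index x s < size (map ev s) by move=> x; rewrite size_map index_mem.
exists (fun x => Ordinal (fok x)); split.
  exists (fun i : 'I_(size (map ev s)) => nth o s i).
    by move=> x /=; rewrite nth_index.
  move=> i; apply: val_inj => /=; rewrite index_uniq //.
  by rewrite -(size_map ev) ltn_ord.
split.
  by move=> x /=; rewrite (nth_map o) ?index_mem // nth_index.
move=> x y H /=; exact: idx_lt (K'lt _ _ H).
Qed.

Lemma restrict_hist h D : is_history h -> is_history (restrict h D).
Proof.
move=> [irr [tr iv]]; split; [|split] => /=.
- move=> o; exact: irr.
- move=> a b c; exact: tr.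
- move=> a b c d; exact: iv.
Qed.

Lemma restrict_diff h D : differentiated h -> differentiated (restrict h D).
Proof.
move=> [H1 H2]; split=> /=.
- move=> o1 o2 A B C; apply: val_inj; exact: H1.
- move=> o1 o2 A B; apply: val_inj; exact: H2.
Qed.

Lemma RHS_restrict h D : RHS (restrict h D) -> RHS h.
Proof.
move=> [o [m [dd [Ho [Hm [Hdom [[e [He1 [He2 He3]]] [Hi Hlast]]]]]]]].
have inD : forall i, 1 <= i <= m -> D (dd i).
  move=> i /Hdom [x <-]; exact: (svalP x).
exists (sval o), m, dd; split=> //; split=> //; split.
  move=> i /Hdom [x <-]; by exists (sval x).
split; first by exists (sval e).
split.
  move=> i Hi'; have [e' [E1 [E2 E3]]] := Hi i Hi'.
  exists (sval e'); split=> //; split=> // p Hp1 Hp2.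
  have Dp : D (hval p) by rewrite Hp2; apply: inD; lia.
  exact: (E3 (exist (fun o : hop h => D (hval o)) p Dp)).
case: Hlast => [HL|HL]; [left|right].
  move=> p Hp1 Hp2. have Dp : D (hval p) by rewrite Hp2; apply: inD; lia.
  exact: (HL (exist (fun o : hop h => D (hval o)) p Dp)).
move=> [p [Hp1 Hp2]]; apply: HL.
have Dp : D (hval p) by rewrite Hp2; apply: inD; lia.
by exists (exist (fun o : hop h => D (hval o)) p Dp).
Qed.

Lemma lemB h : is_history h -> differentiated h -> RHS h ->
  exists D : pred nat, has_DeqEmpty (restrict h D) /\ ~ lin_M_DeqEmpty (restrict h D).
Proof.
move=> Hh [Hd1 Hd2] [o [m [dd [Ho [Hm [Hdom [[e1 [E11 [E12 E13]]] [Hi Hlast]]]]]]]].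
pose D : pred nat := fun v => (v == hval o) || has (fun i => v == dd i) (iota 1 m).
have Do : D (hval o) by rewrite /D eqxx.
have Ddd : forall i, 1 <= i <= m -> D (dd i).
  move=> i Hi'; apply/orP; right; apply/hasP; exists i => //; rewrite mem_iota; lia.
have Enqs : forall i, 1 <= i <= m -> exists e : hop h, hmeth e = Enq /\ hval e = dd i.
  move=> i Hi'; case: (ltnP 1 i) => Hi1.
    have [e [? [? _]]] := Hi i (ltac:(lia)); by exists e.
  have -> : i = 1 by lia.
  by exists e1.
pose lift (x : hop h) (Hx : D (hval x)) :=
  (exist (fun o : hop h => D (hval o)) x Hx : hop (restrict h D)).
exists D; split; first by exists (lift o Do).
move=> [w [[u [v [x [Ew [Hu Hx]]]]] [f [[g Hfg Hgf] [Hlab Hhb]]]]].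
have su : size u < size w by rewrite Ew size_cat /=; lia.
have nthu : forall i, i < size u -> nth ev0 w i = nth ev0 u i.
  by move=> i Hi'; rewrite Ew nth_cat Hi'.
pose q := g (Ordinal su).
have fq : f q = Ordinal su by rewrite /q Hgf.
have Eq0 : nth ev0 w (size u) = (DeqEmpty, x) by rewrite Ew nth_cat ltnn subnn.
have := Hlab q; rewrite fq /= Eq0 => -[Eq1 Eq2].
have sq : sval q = o.
  case/orP: (svalP q) => [/eqP E | /hasP [i Hi' /eqP E]].
    by apply: Hd2.
  move: Hi'; rewrite mem_iota => Hi'.
  have [e [Ee1 Ee2]] := Enqs i (ltac:(lia)).
  have := Hd1 (sval q) e (or_intror (esym Eq1)) (or_introl Ee1) (etrans E (esym Ee2)).
  by move=> Eqe; move: Ee1 Eq1; rewrite -Eqe => ->.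
have fo : nat_of_ord (f (lift o Do)) = size u.
  have -> : lift o Do = q by apply: val_inj; rewrite /= sq.
  by rewrite fq.
have step : forall k, (exists e' : hop (restrict h D), hmeth e' = Enq /\ hval e' = dd k /\ f e' < size u) ->
   exists p' : hop (restrict h D), hmeth p' = Deq /\ hval p' = dd k /\ f p' < size u.
  move=> k [e' [He1 [He2 Hfe]]].
  have : List.In (Enq, dd k) u.
    have := Hlab e'; rewrite nthu // He1 He2 => <-. exact: nth_In.
  move/Hu => /(In_nth ev0) [j [Hj Ej]].
  have Hjw : j < size w by rewrite Ew size_cat; lia.
  have Ewj : nth ev0 w j = (Deq, dd k) by rewrite nthu.
  exists (g (Ordinal Hjw)).
  have := Hlab (g (Ordinal Hjw)); rewrite Hgf /= Ewj => -[E1 E2].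
  split; first exact: (esym E1).
  split; first exact: (esym E2).
  by [].
have reachk : forall k, 1 <= k <= m ->
    exists e' : hop (restrict h D), hmeth e' = Enq /\ hval e' = dd k /\ f e' < size u.
  elim=> [|k IH] Hk; first lia.
  case: (posnP k) => [k0|kpos].
    subst k.
    have De : D (hval e1) by rewrite E12; apply: Ddd.
    exists (lift e1 De); split=> //; split=> //.
    rewrite -fo; exact: (Hhb (lift e1 De) (lift o Do) E13).
  have [p' [P1 [P2 P3]]] := step k (IH (ltac:(lia))).
  have [e [Ee1 [Ee2 Ee3]]] := Hi k.+1 (ltac:(lia)).
  have De : D (hval e) by rewrite Ee2; apply: Ddd.
  exists (lift e De); split=> //; split=> //.
  have := Hhb (lift e De) p' (Ee3 (sval p') P1 P2).
  lia.
have [p' [P1 [P2 P3]]] := step m (reachk m (ltac:(lia))).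
case: Hlast => [HL|HL].
  have := Hhb (lift o Do) p' (HL (sval p') P1 P2). lia.
by apply: HL; exists (sval p').
Qed.

Theorem mainTheorem6 (h : history) :
  is_history h -> differentiated h ->
  ((exists D : pred nat,
       has_DeqEmpty (restrict h D) /\ ~ lin_M_DeqEmpty (restrict h D)) <->
   (exists (o : hop h) (m : nat) (d : nat -> nat),
       hmeth o = DeqEmpty /\ (1 <= m)%N /\
       (forall i, (1 <= i <= m)%N -> in_dom h (d i)) /\
       (* Enq(d_1) <_hb o *)
       (exists e : hop h, hmeth e = Enq /\ hval e = d 1 /\ hb e o) /\
       (* Enq(d_i) <_hb Deq(d_{i-1}) for 1 < i <= m *)
       (forall i, (1 < i <= m)%N ->
          exists e : hop h, hmeth e = Enq /\ hval e = d i /\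
            forall p : hop h, hmeth p = Deq -> hval p = d i.-1 -> hb e p) /\
       (* o <_hb Deq(d_m), or h has no Deq(d_m) *)
       ((forall p : hop h, hmeth p = Deq -> hval p = d m -> hb o p) \/
        ~ (exists p : hop h, hmeth p = Deq /\ hval p = d m)))).
Proof.
move=> Hh Hd; split.
  move=> [D [[o' Ho'] nL]].
  apply: (@RHS_restrict h D); apply: NNPP => nR; apply: nL.
  apply: (@lemA _ o') => //; [exact: restrict_hist | exact: restrict_diff].
exact: lemB.
Qed.
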